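(* Let $a,b,d<0$ and $c>0$ be real numbers with $c\le c^-$, and let $\{W_n(z)\}_{n\ge0}$ be the normalised sequence defined below. Then for every $n\ge1$ the polynomial $W_n(z)$ is real-rooted, and \[ |R_n^{J_1}|=\lfloor (n-1)/2\rfloor,\qquad |R_n^{J_2\cup J_3}|=\lfloor n/2\rfloor,\qquad |R_n^{J_4}|=1 . \] Moreover, \[ |R_n^{J_3}|=\begin{cases}1,&\text{if }\Delta_\Delta>\Delta_g\text{ and }n\ge n^+,\\ 0,&\text{otherwise.}\end{cases} \]
   Context: Let $a,b,c,d\in\mathbb{R}$ with $ac\ne0$, and put $A(z)=az+b$, $B(z)=cz+d$. The normalised sequence $\{W_n(z)\}_{n\ge0}$ is defined by $W_0(z)=1$, $W_1(z)=z$ and $W_n(z)=A(z)W_{n-1}(z)+B(z)W_{n-2}(z)$ for $n\ge2$; $W_n$ has degree $n$ with leading coefficient $a^{n-1}$. Notation (for $a,b,d<0<c$): - $\Delta_\Delta=-a^2d+abc+c^2$ (which is $>0$), and $x_\Delta^\pm=\dfrac{-ab-2c\pm2\sqrt{\Delta_\Delta}}{a^2}$ are the zeros of $\Delta(z)=A(z)^2+4B(z)=a^2z^2+(2ab+4c)z+(b^2+4d)$. - $g(z)=(1-a)z^2-(b+c)z-d$, $\Delta_g=(b+c)^2+4d(1-a)$, and $x_g^\pm=\dfrac{b+c\pm\sqrt{\Delta_g}}{2(1-a)}$ are the zeros of $g$. - $c^\pm=\pm2\sqrt{d(a-1)}-b$; then $x_g^\pm$ are real iff $c\le c^-$ or $c\ge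 c^+$. - $x_A=-b/a$, $x_B=-d/c$, $h(z)=(2-a)z-b$, and $n^+=-A(x_\Delta^+)/h(x_\Delta^+)$ (defined whenever $h(x_\Delta^+)\ne0$, which is the case when $\Delta_\Delta\neq\Delta_g$). - $J_1=(x_\Delta^-,x_A)$, $J_2=(x_A,x_\Delta^+)$, $J_3=[x_\Delta^+,x_g^-)$, $J_4=(x_g^+,0]$. - $R_n$ denotes the multiset of zeros of $W_n(z)$ (with multiplicity), and for an interval $J$, $R_n^J=R_n\cap J$; $|\cdot|$ is cardinality counted with multiplicity. A polynomial is real-rooted if all its zeros are real. *)

(* Defs.v *)
From HB Require Import structures.
From mathcomp Require Import all_boot all_order all_algebra.
Set Implicit Arguments. Unset Strict Implicit. Unset Printing Implicit Defensive.
Import Order.TTheory GRing.Theory Num.Theory.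
Local Open Scope ring_scope.

Section Defs.
Variable R : rcfType.
Variables a b c d : R.

Definition Apoly : {poly R} := a%:P * 'X + b%:P.
Definition Bpoly : {poly R} := c%:P * 'X + d%:P.

(* Wpair n = (W_n, W_{n+1}) *)
Fixpoint Wpair (n : nat) : {poly R} * {poly R} :=
  match n with
  | 0%N => (1, 'X)
  | k.+1 => let p := Wpair k in (p.2, Apoly * p.2 + Bpoly * p.1)
  end.

Definition W (n : nat) : {poly R} := (Wpair n).1.

Definition DeltaDelta : R := - a ^+ 2 * d + a * b * c + c ^+ 2.
Definition xDeltam : R := (- a * b - 2 * c - 2 * Num.sqrt DeltaDelta) / a ^+ 2.
Definition xDeltap : R := (- a * b - 2 * c + 2 * Num.sqrt DeltaDelta) / a ^+ 2.

Definition Deltag : R := (b + c) ^+ 2 + 4 * d * (1 - a).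
Definition xgm : R := (b + c - Num.sqrt Deltag) / (2 * (1 - a)).
Definition xgp : R := (b + c + Num.sqrt Deltag) / (2 * (1 - a)).

Definition cminus : R := - 2 * Num.sqrt (d * (a - 1)) - b.

Definition xA : R := - b / a.
Definition hfun (z : R) : R := (2 - a) * z - b.
Definition nplus : R := - (Apoly.[xDeltap]) / hfun xDeltap.

Definition inJ1 (x : R) : bool := (xDeltam < x) && (x < xA).
Definition inJ2 (x : R) : bool := (xA < x) && (x < xDeltap).
Definition inJ3 (x : R) : bool := (xDeltap <= x) && (x < xgm).
Definition inJ4 (x : R) : bool := (xgp < x) && (x <= 0).
End Defs.

(* s is the multiset of zeros (with multiplicity) of p, all real:
   p = lead_coef p * prod_{r in s} (X - r). *)
Definition zeros_list (R : rcfType) (p : {poly R}) (s : seq R) : Prop :=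
  p = lead_coef p *: \prod_(r <- s) ('X - r%:P).

Definition real_rooted (R : rcfType) (p : {poly R}) : Prop :=
  exists s : seq R, zeros_list p s.

(* Main.v *)
Require Import Defs.
From HB Require Import structures.
From mathcomp Require Import all_boot all_order all_algebra.
From mathcomp Require Import ring lra zify.
Set Implicit Arguments. Unset Strict Implicit. Unset Printing Implicit Defensive.
Import Order.TTheory GRing.Theory Num.Theory.
Local Open Scope ring_scope.

Section Gen.
Variable R : rcfType.

Lemma ivt (p : {poly R}) u v k : u < v -> 0 < (-1) ^+ k * p.[u] ->
  0 < (-1) ^+ k.+1 * p.[v] -> exists2 r, u < r < v & root p r.
Proof.
move=> uv hu hv.
have side : ((-1) ^+ k.+1 *: p).[u] <= 0 <= ((-1) ^+ k.+1 *: p).[v].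
  rewrite !hornerZ; apply/andP; split; last exact: ltW.
  by rewrite exprS mulN1r mulNr oppr_le0 ltW.
have [r /andP[ur rv] hr] := @poly_ivt R ((-1) ^+ k.+1 *: p) u v (ltW uv) side.
have hr' : root p r.
  by move: hr; rewrite rootE hornerZ mulf_eq0 signr_eq0.
exists r => //; apply/andP; split.
  rewrite lt_neqAle ur andbT; apply/negP => /eqP e; move: hr'; rewrite -e rootE => /eqP h.
  by move: hu; rewrite h mulr0 ltxx.
rewrite lt_neqAle rv andbT; apply/negP => /eqP e; move: hr'; rewrite e rootE => /eqP h.
by move: hv; rewrite h mulr0 ltxx.
Qed.

Lemma prod_sign (f : nat -> R) x m j : (j <= m)%N ->
  (forall i, (i < m)%N -> ((i < j)%N -> f i < x) /\ ((j <= i)%N -> x < f i)) ->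
  0 < (-1) ^+ (m - j) * \prod_(i <- iota 0 m) (x - f i).
Proof.
elim: m j => [|m IH] j hj hf.
  by rewrite leqn0 in hj; rewrite (eqP hj) big_nil expr0 mulr1 ltr01.
rewrite -addn1 iotaD big_cat big_seq1 /= add0n.
have [hjm | hjm] := leqP j m.
  have := IH j hjm (fun i hi => hf i (ltnW hi)).
  have [_ h2] := hf m (ltnSn m); have h3 := h2 hjm.
  rewrite addn1 subSn // exprS => h.
  have h4 : x - f m < 0 by lra.
  set P := \prod_(i <- iota 0 m) _ in h *; set s := (-1) ^+ (m - j) in h *.
  have -> : -1 * s * (P * (x - f m)) = (s * P) * (- (x - f m)) by ring.
  by apply: mulr_gt0; lra.
have ej : j = m.+1 by apply/eqP; rewrite eqn_leq hj hjm.
have hf' : forall i, (i < m)%N -> ((i < m)%N -> f i < x) /\ ((m <= i)%N -> x < f i).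
  move=> i hi; split=> h; last by move: h; rewrite leqNgt hi.
  by apply: (hf i (ltnW hi)).1; rewrite ej ltnW.
have := IH m (leqnn m) hf'.
have [h1 _] := hf m (ltnSn m); have h3 : f m < x by apply: h1; rewrite ej.
rewrite subnn ej addn1 subnn !expr0 !mul1r => h.
by apply: mulr_gt0; lra.
Qed.

Lemma count_thr (p : pred R) (f : nat -> R) m j : (j <= m)%N ->
  (forall i, (i < m)%N -> p (f i) = (i < j)%N) -> count p (map f (iota 0 m)) = j.
Proof.
elim: m j => [|m IH] j hj hf; first by rewrite leqn0 in hj; rewrite (eqP hj).
rewrite -addn1 iotaD map_cat count_cat /= add0n addn0.
have [hjm | hjm] := leqP j m.
  rewrite (IH j) //; last by move=> i hi; apply: hf; apply: ltnW.
  by rewrite hf // ltnNge hjm addn0.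
have ej : j = m.+1 by apply/eqP; rewrite eqn_leq hj hjm.
rewrite (IH m) //; last by move=> i hi; rewrite hf ?ej ?ltnS ?(ltnW hi) // ltnW.
by rewrite hf // ej ltnSn addn1.
Qed.

Lemma count_thr2 (p : pred R) (f : nat -> R) m j : (j <= m)%N ->
  (forall i, (i < m)%N -> p (f i) = (j <= i)%N) -> count p (map f (iota 0 m)) = (m - j)%N.
Proof.
move=> hj hf.
have h1 : count (predC p) (map f (iota 0 m)) = j.
  by apply: count_thr => // i hi; rewrite /= hf // -ltnNge.
have e := count_predC p (map f (iota 0 m)); rewrite h1 size_map size_iota in e.
by rewrite -[in RHS]e addnK.
Qed.

Lemma half_sub m : (m - m./2 = m.+1./2)%N.
Proof. by rewrite -uphalfE uphalf_half -{1}(odd_double_half m) -addnn addnA addnK. Qed.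

Lemma horner_prodX (f : nat -> R) s x :
  (\prod_(r <- map f s) ('X - r%:P)).[x] = \prod_(i <- s) (x - f i).
Proof.
rewrite horner_prod big_map; apply: eq_bigr => i _; by rewrite hornerXsubC.
Qed.

End Gen.

Section Main.
Variable R : rcfType.
Variables a b c d : R.
Hypothesis ha : a < 0.
Hypothesis hb : b < 0.
Hypothesis hd : d < 0.
Hypothesis hc : 0 < c.
Hypothesis hcm : c <= cminus a b d.

Local Notation w n x := (W a b c d n).[x].
Ltac hyps := have := ha; have := hb; have := hd; have := hc; move=> ? ? ? ?.

Lemma W0 : W a b c d 0 = 1. Proof. by []. Qed.
Lemma W1 : W a b c d 1 = 'X. Proof. by []. Qed.
Lemma WS n : W a b c d n.+2 = Apoly a b * W a b c d n.+1 + Bpoly c d * W a b c d n.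
Proof. by []. Qed.
Lemma wS n x : w n.+2 x = (a * x + b) * w n.+1 x + (c * x + d) * w n x.
Proof. by rewrite WS /Apoly /Bpoly !hornerE. Qed.
Lemma w0 x : w 0 x = 1. Proof. by rewrite W0 hornerE. Qed.
Lemma w1 x : w 1 x = x. Proof. by rewrite W1 hornerX. Qed.

Lemma size_lin (u v : R) : (size ((u%:P * 'X + v%:P)%R) <= 2)%N.
Proof.
apply: leq_trans (size_polyD _ _) _; rewrite geq_max; apply/andP; split.
  by rewrite mul_polyC; apply: leq_trans (size_scale_leq _ _) _; rewrite size_polyX.
by apply: leq_trans (size_polyC_leq1 _) _.
Qed.

Lemma sizeW n : (size (W a b c d n) <= n.+1)%N.
Proof.
have: (size (W a b c d n) <= n.+1)%N /\ (size (W a b c d n.+1) <= n.+2)%N.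
  elim: n => [|n [IH1 IH2]]; first by rewrite W0 W1 size_polyX size_poly1.
  split=> //; rewrite WS; apply: leq_trans (size_polyD _ _) _.
  rewrite geq_max; apply/andP; split.
    apply: leq_trans (size_polyMleq _ _) _.
    have := size_lin a b; rewrite -/(Apoly a b); lia.
  apply: leq_trans (size_polyMleq _ _) _.
  have := size_lin c d; rewrite -/(Bpoly c d); lia.
by case.
Qed.

Local Notation DD := (DeltaDelta a b c d).
Local Notation Dg := (Deltag a b c d).
Local Notation xm := (xDeltam a b c d).
Local Notation xp := (xDeltap a b c d).
Local Notation gm := (xgm a b c d).
Local Notation gp := (xgp a b c d).
Local Notation xA := (Defs.xA a b).

Lemma a_neq0 : a != 0. Proof. by rewrite lt_eqF. Qed.
Lemma a2_gt0 : 0 < a ^+ 2. Proof. by rewrite expr2 nmulr_rgt0. Qed.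

Lemma DD_gt0 : 0 < DD.
Proof.
rewrite /DeltaDelta; have h1 := a2_gt0; have h2 : 0 < a * b by (hyps; nra).
have h3 : 0 < a * b * c by (hyps; nra). have h4 : 0 < a ^+ 2 * (- d) by rewrite mulr_gt0 // oppr_gt0.
have h5 : 0 < c ^+ 2 by rewrite expr2; (hyps; nra).
(hyps; lra).
Qed.

Lemma hs : Num.sqrt DD ^+ 2 = DD.
Proof. by rewrite sqr_sqrtr // ltW // DD_gt0. Qed.

Lemma xpm_sum : xp + xm = - (2 * a * b + 4 * c) / a ^+ 2.
Proof. rewrite /xDeltap /xDeltam; have := a_neq0 => ?; field; rewrite ?expf_neq0 //. Qed.

Lemma xpm_prod : xp * xm = (b ^+ 2 + 4 * d) / a ^+ 2.
Proof.
rewrite /xDeltap /xDeltam; have := a_neq0 => an0.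
rewrite mulf_div.
have -> : (- a * b - 2 * c + 2 * Num.sqrt DD) * (- a * b - 2 * c - 2 * Num.sqrt DD)
   = (- a * b - 2 * c) ^+ 2 - 4 * Num.sqrt DD ^+ 2 by ring.
rewrite hs /DeltaDelta; field; rewrite ?expf_neq0 //.
Qed.

Lemma Delta_fact z : (a * z + b) ^+ 2 + 4 * (c * z + d) = a ^+ 2 * ((z - xm) * (z - xp)).
Proof.
have -> : (z - xm) * (z - xp) = z ^+ 2 - (xp + xm) * z + xp * xm by ring.
rewrite xpm_sum xpm_prod; have := a_neq0 => ?; field; rewrite ?expf_neq0 //.
Qed.

Lemma xm_le_xp : xm <= xp.
Proof.
rewrite /xDeltap /xDeltam ler_pM2r ?invr_gt0 ?a2_gt0 //.
have := sqrtr_ge0 DD; (hyps; lra).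
Qed.

Lemma r_sq : Num.sqrt (d * (a - 1)) ^+ 2 = d * (a - 1).
Proof. by rewrite sqr_sqrtr //; (hyps; nra). Qed.

Lemma bc_le : b + c <= - 2 * Num.sqrt (d * (a - 1)).
Proof. by move: hcm; rewrite /cminus; (hyps; lra). Qed.

Lemma Dg_ge0 : 0 <= Dg.
Proof.
rewrite /Deltag; have := bc_le; have := r_sq; have := sqrtr_ge0 (d * (a - 1)); (hyps; nra).
Qed.

Lemma b2d_gt0 : - d < b ^+ 2 / 4.
Proof.
have := bc_le; have := r_sq; have := sqrtr_ge0 (d * (a - 1)); (hyps; nra).
Qed.

Lemma hg : Num.sqrt Dg ^+ 2 = Dg.
Proof. by rewrite sqr_sqrtr // Dg_ge0. Qed.

Lemma oma_gt0 : 0 < 1 - a. Proof. (hyps; lra). Qed.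
Lemma oma_neq0 : 1 - a != 0. Proof. by rewrite lt0r_neq0 // oma_gt0. Qed.

Lemma g_sum : gm + gp = (b + c) / (1 - a).
Proof. rewrite /xgm /xgp; have := oma_neq0 => ?; field; rewrite ?mulf_neq0 //. Qed.

Lemma g_prod : gm * gp = - d / (1 - a).
Proof.
rewrite /xgm /xgp mulf_div; have := oma_neq0 => an0.
have -> : (b + c - Num.sqrt Dg) * (b + c + Num.sqrt Dg) = (b + c) ^+ 2 - Num.sqrt Dg ^+ 2 by ring.
rewrite hg /Deltag; field; rewrite ?mulf_neq0 //.
Qed.

Lemma g_fact z : (1 - a) * z ^+ 2 - (b + c) * z - d = (1 - a) * ((z - gm) * (z - gp)).
Proof.
have -> : (z - gm) * (z - gp) = z ^+ 2 - (gm + gp) * z + gm * gp by ring.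
rewrite g_sum g_prod; have := oma_neq0 => ?; field; rewrite ?mulf_neq0 //.
Qed.

Lemma gm_le_gp : gm <= gp.
Proof.
rewrite /xgm /xgp ler_pM2r ?invr_gt0 ?pmulr_rgt0 ?oma_gt0 //.
have := sqrtr_ge0 Dg; (hyps; lra).
Qed.

Lemma gp_lt0 : gp < 0.
Proof.
rewrite /xgp pmulr_llt0 ?invr_gt0 ?pmulr_rgt0 ?oma_gt0 //.
have h1 := bc_le; have h2 := sqrtr_ge0 (d * (a - 1)).
have h3 := hg; have h4 := sqrtr_ge0 Dg; have h5 : Dg < (b + c) ^+ 2 by rewrite /Deltag; (hyps; nra).
(hyps; nra).
Qed.


Lemma aA : a * xA + b = 0.
Proof. by rewrite /Defs.xA; have := a_neq0 => ?; field. Qed.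

Lemma xA_lt0 : xA < 0.
Proof. have := aA; (hyps; nra). Qed.

Lemma BxA_lt0 : c * xA + d < 0.
Proof. have := xA_lt0; (hyps; nra). Qed.

Lemma xm_lt_xA : xm < xA.
Proof.
have h1 := Delta_fact xA; rewrite aA expr0n /= add0r in h1.
have h2 := BxA_lt0; have h3 := a2_gt0; have h4 := xm_le_xp.
have h5 : (xA - xm) * (xA - xp) < 0.
  by rewrite -(pmulr_rlt0 _ h3) -h1; (hyps; lra).
(hyps; nra).
Qed.

Lemma xA_lt_xp : xA < xp.
Proof.
have h1 := Delta_fact xA; rewrite aA expr0n /= add0r in h1.
have h2 := BxA_lt0; have h3 := a2_gt0; have h4 := xm_le_xp.
have h5 : (xA - xm) * (xA - xp) < 0.
  by rewrite -(pmulr_rlt0 _ h3) -h1; (hyps; lra).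
(hyps; nra).
Qed.

Lemma xA_lt_gm : xA < gm.
Proof.
have h1 := g_fact xA.
have h2 : 0 < (1 - a) * xA ^+ 2 - (b + c) * xA - d.
  have -> : (1 - a) * xA ^+ 2 - (b + c) * xA - d = xA ^+ 2 - (a * xA + b) * xA - (c * xA + d) by ring.
  rewrite aA mul0r subr0; have := BxA_lt0; have := xA_lt0; (hyps; nra).
have h3 : 0 < (xA - gm) * (xA - gp).
  rewrite h1 in h2; have := oma_gt0; (hyps; nra).
have h4 : xA * (2 * (1 - a)) < b + c.
  have := aA; have := xA_lt0; (hyps; nra).
have h5 : 2 * xA < gm + gp.
  rewrite g_sum ltr_pdivlMr ?oma_gt0 //; (hyps; lra).
have := gm_le_gp; (hyps; nra).
Qed.

Lemma Delta_xp : (a * xp + b) ^+ 2 + 4 * (c * xp + d) = 0.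
Proof. by rewrite Delta_fact subrr mulr0 mulr0. Qed.
Lemma Delta_xm : (a * xm + b) ^+ 2 + 4 * (c * xm + d) = 0.
Proof. by rewrite Delta_fact subrr mul0r mulr0. Qed.

Lemma g_gm : (1 - a) * gm ^+ 2 - (b + c) * gm - d = 0.
Proof. by rewrite g_fact subrr mul0r mulr0. Qed.
Lemma g_gp : (1 - a) * gp ^+ 2 - (b + c) * gp - d = 0.
Proof. by rewrite g_fact subrr mulr0 mulr0. Qed.

Lemma xp_le_gm : xp <= gm.
Proof.
rewrite leNgt; apply/negP => hlt.
have h1 := Delta_fact gm.
have h2 : (a * gm + b) ^+ 2 + 4 * (c * gm + d) = (a * gm + b - 2 * gm) ^+ 2.
  have := g_gm => e.
  have -> : c * gm + d = gm ^+ 2 - (a * gm + b) * gm.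
    by move: e; (hyps; lra).
  ring.
have h3 := xm_lt_xA; have h4 := xA_lt_gm; have h5 := a2_gt0.
have h6 : (gm - xm) * (gm - xp) < 0 by (hyps; nra).
have h7 : 0 <= (a * gm + b - 2 * gm) ^+ 2 by apply: sqr_ge0.
have : a ^+ 2 * ((gm - xm) * (gm - xp)) < 0 by rewrite pmulr_rlt0.
rewrite -h1 h2; (hyps; lra).
Qed.

Lemma gm_lt0 : gm < 0.
Proof. have := gm_le_gp; have := gp_lt0; (hyps; lra). Qed.
Lemma xp_lt0 : xp < 0.
Proof. have := xp_le_gm; have := gm_lt0; (hyps; lra). Qed.

Lemma alpha_lt0 : a * xp + b < 0.
Proof. have := xA_lt_xp; have := aA; (hyps; nra). Qed.
Lemma alpham_gt0 : 0 < a * xm + b.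
Proof. have := xm_lt_xA; have := aA; (hyps; nra). Qed.

Lemma hxm_lt0 : hfun a b xm < 0.
Proof. rewrite /hfun; have := xm_lt_xA; have := aA; have := xA_lt0; (hyps; nra). Qed.


Lemma sgnSS (k : nat) : (-1) ^+ k.+2 = (-1) ^+ k :> R.
Proof. by rewrite !exprS mulrA mulrNN mulr1 mul1r. Qed.
Lemma sgnS (k : nat) (v : R) : (-1) ^+ k.+1 * v = (-1) ^+ k * (- v).
Proof. by rewrite exprS mulN1r mulNr mulrN. Qed.

Lemma CF1 x : (a * x + b) ^+ 2 + 4 * (c * x + d) = 0 -> forall n,
  w n.+1 x = ((a * x + b) / 2) ^+ n * (n.+1%:R * x - n%:R * ((a * x + b) / 2)).
Proof.
move=> hD.
have hB : c * x + d = - ((a * x + b) / 2) ^+ 2 by move: hD; (hyps; lra).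
have hA : a * x + b = 2 * ((a * x + b) / 2) by field.
move: ((a * x + b) / 2) hA hB => al hA hB n.
suff: w n.+1 x = al ^+ n * (n.+1%:R * x - n%:R * al) /\
      w n.+2 x = al ^+ n.+1 * (n.+2%:R * x - n.+1%:R * al) by case.
elim: n => [|n [IH1 IH2]].
  rewrite w1 wS w1 w0 hA hB; split; first by rewrite expr0 mul1r mul0r subr0 mul1r.
  rewrite expr1 -!natr1 /=; ring.
split=> //; rewrite wS IH1 IH2 hA hB.
rewrite -!natr1 !exprS; ring.
Qed.

Lemma CF2 x : (1 - a) * x ^+ 2 - (b + c) * x - d = 0 -> forall n, w n x = x ^+ n.
Proof.
move=> hg n.
have hB : c * x + d = x ^+ 2 - (a * x + b) * x by move: hg; (hyps; lra).
suff: w n x = x ^+ n /\ w n.+1 x = x ^+ n.+1 by case.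
elim: n => [|n [IH1 IH2]]; first by rewrite w0 w1 expr0 expr1.
split=> //; rewrite wS IH1 IH2 hB !exprS; ring.
Qed.

Lemma CF3 k : w k.*2 xA = (c * xA + d) ^+ k /\ w k.*2.+1 xA = (c * xA + d) ^+ k * xA.
Proof.
elim: k => [|k [IH1 IH2]]; first by rewrite w0 w1 expr0 mul1r.
rewrite doubleS wS IH1 wS IH2 aA !mul0r !add0r exprS; split; ring.
Qed.

Lemma w0_sign n : 0 < (-1) ^+ n.+3 * w n.+2 0.
Proof.
pose v n := (-1) ^+ n.+1 * w n 0.
have rec k : v k.+2 = - b * v k.+1 + d * v k.
  rewrite /v wS !mulr0 !add0r !exprS; ring.
have hb2 := b2d_gt0.
suff: 0 <= v n.+1 /\ 0 < v n.+2 /\ (- b / 2) * v n.+1 <= v n.+2.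
  by case=> _ [].
elim: n => [|n [IH1 [IH2 IH3]]].
  rewrite /v w1 wS w1 w0 !mulr0 !add0r mulr1 !exprS expr0.
  by split; [(hyps; lra) | split; (hyps; nra)].
rewrite (rec n.+1); split; first by (hyps; lra).
have h4 : 0 <= (- b / 2) * v n.+2 - (- b / 2) * v n.+1 * (- b / 2) by (hyps; nra).
split; (hyps; nra).
Qed.


Lemma sgn_pow (x : R) n : x < 0 -> 0 < (-1) ^+ n * x ^+ n.
Proof. by move=> hx; rewrite -exprNn exprn_gt0 // oppr_gt0. Qed.

Local Notation al := ((a * xp + b) / 2).
Definition ee (k : nat) : R := k%:R * (xp - al) + al.

Lemma al_lt0 : al < 0. Proof. have := alpha_lt0; (hyps; lra). Qed.

Lemma wxp n : w n.+1 xp = al ^+ n * ee n.+1.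
Proof. rewrite (CF1 Delta_xp) /ee -natr1; ring. Qed.

Lemma wxp_sign n : 0 < (-1) ^+ n * al ^+ n. Proof. exact: sgn_pow al_lt0. Qed.

Lemma wxm_neg n : w n.+1 xm < 0.
Proof.
rewrite (CF1 Delta_xm).
have h1 : 0 < ((a * xm + b) / 2) ^+ n by rewrite exprn_gt0 //; have := alpham_gt0; (hyps; lra).
have h2 := hxm_lt0; rewrite /hfun in h2.
have h3 : xm < 0 by have := xm_lt_xA; have := xA_lt0; (hyps; lra).
have h4 : 0 <= n%:R :> R by apply: ler0n.
have h5 : n.+1%:R * xm - n%:R * ((a * xm + b) / 2) < 0.
  rewrite -natr1; (hyps; nra).
rewrite pmulr_rlt0 //.
Qed.

Lemma wgm n : w n gm = gm ^+ n. Proof. by apply: CF2; apply: g_gm. Qed.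
Lemma wgp n : w n gp = gp ^+ n. Proof. by apply: CF2; apply: g_gp. Qed.

Lemma hfun_xp : hfun a b xp = 2 * (xp - al).
Proof. by rewrite /hfun; field. Qed.

Lemma hh_ident : a ^+ 2 * (hfun a b xp * hfun a b xm) = - 4 * (DD - Dg).
Proof.
rewrite /hfun.
have -> : ((2 - a) * xp - b) * ((2 - a) * xm - b) =
   (2 - a) ^+ 2 * (xp * xm) - b * (2 - a) * (xp + xm) + b ^+ 2 by ring.
rewrite xpm_sum xpm_prod /DeltaDelta /Deltag; have := a_neq0 => ?; field; rewrite ?expf_neq0 //.
Qed.

Lemma DDDg : (Dg < DD) = (0 < xp - al).
Proof.
have h1 := hh_ident; have h2 := hxm_lt0; rewrite hfun_xp in h1.
have h3 := a2_gt0.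
apply/idP/idP => h.
  have : a ^+ 2 * (2 * (xp - al) * hfun a b xm) < 0 by rewrite h1; (hyps; lra).
  rewrite pmulr_rlt0 // => h4; (hyps; nra).
have h4 : 2 * (xp - al) * hfun a b xm < 0 by (hyps; nra).
have h5 : a ^+ 2 * (2 * (xp - al) * hfun a b xm) < 0 by rewrite pmulr_rlt0.
rewrite h1 in h5; (hyps; lra).
Qed.

Lemma ee_neg k : xp - al <= 0 -> ee k < 0.
Proof. move=> h; rewrite /ee; have := ler0n R k; have := al_lt0; (hyps; nra). Qed.

Lemma eeS k : ee k.+1 = ee k + (xp - al).
Proof. by rewrite /ee -natr1; ring. Qed.

Lemma ee1 : ee 1 = xp. Proof. by rewrite /ee mul1r; ring. Qed.

Lemma xp_gm_al : xp = gm -> xp = al.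
Proof.
move=> e.
have h : (1 - a) * xp ^+ 2 - (b + c) * xp - d = (xp - al) ^+ 2.
  have := Delta_xp; (hyps; lra).
have h0 : (1 - a) * xp ^+ 2 - (b + c) * xp - d = 0 by rewrite e; apply: g_gm.
rewrite h0 in h.
by apply/eqP; rewrite -subr_eq0 -sqrf_eq0 -h.
Qed.

Lemma hornerApoly x : (Apoly a b).[x] = a * x + b.
Proof. by rewrite /Apoly !hornerE. Qed.

Lemma cond_eq k : (0 <= ee k) = ((Dg < DD) && (nplus a b c d <= k%:R)).
Proof.
rewrite DDDg.
have [h|h] := ltP 0 (xp - al); last first.
  by apply/negbTE; rewrite -ltNge; apply: ee_neg.
rewrite /= /nplus hfun_xp hornerApoly.
have h2 : 0 < 2 * (xp - al) by (hyps; lra).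
rewrite ler_pdivrMr //.
rewrite /ee; apply/idP/idP => H; (hyps; lra).
Qed.


Definition rts (m : nat) (ys : nat -> R) (y : R) : seq R := map ys (iota 0 m) ++ [:: y].

Definition Inv (m : nat) (ys : nat -> R) (y : R) : Prop :=
  (forall i j, (i < j)%N -> (j < m)%N -> ys i < ys j) /\
  (forall i, (i < m)%N -> xm < ys i < gm) /\
  (gp < y <= 0) /\
  (W a b c d m.+1 = lead_coef (W a b c d m.+1) *: \prod_(r <- rts m ys y) ('X - r%:P)) /\
  (0 < (-1) ^+ m * lead_coef (W a b c d m.+1)) /\
  (forall i, (i < m)%N -> 0 < (-1) ^+ i.+1 * w m (ys i)) /\
  (forall i, (i < m)%N -> ((i < m./2)%N -> ys i < xA) /\ ((m./2 <= i)%N -> xA < ys i)) /\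
  (forall i, (i < m)%N -> ((i.+1 < m)%N \/ ee m.+1 < 0 -> ys i < xp) /\
                         ((m <= i.+1)%N /\ 0 <= ee m.+1 -> xp <= ys i)).

Lemma Inv_eval m ys y : W a b c d m.+1 = lead_coef (W a b c d m.+1) *: \prod_(r <- rts m ys y) ('X - r%:P) ->
  forall x, w m.+1 x = lead_coef (W a b c d m.+1) * ((\prod_(i <- iota 0 m) (x - ys i)) * (x - y)).
Proof.
move=> h x; rewrite [in LHS]h hornerZ /rts big_cat big_seq1 hornerM horner_prodX hornerXsubC.
by [].
Qed.

Lemma Inv0 : Inv 0 (fun _ => 0) 0.
Proof.
split; first by [].
split; first by [].
split; first by rewrite lexx andbT gp_lt0.
split; first by rewrite /rts /= big_seq1 subr0 W1 lead_coefX scale1r.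
split; first by rewrite expr0 mul1r W1 lead_coefX ltr01.
by [].
Qed.


Lemma wxp_pos n : 0 < ee n.+1 -> 0 < (-1) ^+ n * w n.+1 xp.
Proof. by move=> h; rewrite wxp mulrA mulr_gt0 // wxp_sign. Qed.

Lemma wxp_neg n : ee n.+1 < 0 -> 0 < (-1) ^+ n.+1 * w n.+1 xp.
Proof.
move=> h; have h1 := wxp_sign n; rewrite wxp sgnS.
move: h1; set s := (-1) ^+ n; set q := al ^+ n => h1; nra.
Qed.

Lemma sgn_comb j m : (j <= m)%N -> (-1) ^+ j.+1 = - ((-1) ^+ m * (-1) ^+ (m - j)) :> R.
Proof.
move=> hj; rewrite -exprD (_ : (m + (m - j) = j + (m - j).*2)%N); last by rewrite -addnn; lia.
by rewrite exprD -muln2 exprM sqrr_sign mulr1 exprS mulN1r.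
Qed.

Lemma Inv_step m ys y : Inv m ys y -> exists zs y', Inv m.+1 zs y'.
Proof.
move=> [hmono [hrange [hy [hfac [hlead [hsgn [hA hP]]]]]]].
have ev := Inv_eval hfac.
move: hlead ev; set L := lead_coef (W a b c d m.+1) => hlead ev.
have hroot i : (i < m)%N -> w m.+1 (ys i) = 0.
  move=> hi; rewrite hfac hornerZ; apply/eqP; rewrite mulf_eq0; apply/orP; right.
  rewrite -rootE root_prod_XsubC /rts mem_cat; apply/orP; left; apply: map_f.
  by rewrite mem_iota /= add0n.
have xm_gm : xm < gm by have := xm_lt_xA; have := xA_lt_gm; (hyps; lra).
have gm_gp := gm_le_gp.
pose P j := if j == 0%N then xm else if j == m.+1 then gm else ys j.-1.
have hP0 : P 0%N = xm by [].
have hPm : P m.+1 = gm by rewrite /P eqxx.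
have hPys j : (0 < j)%N -> (j <= m)%N -> P j = ys j.-1.
  move=> h1 h2; rewrite /P; case: eqP => [e|_]; first by rewrite e in h1.
  by case: eqP => [e|_] //; rewrite e ltnn in h2.
have hPlt i j : (i < j)%N -> (j <= m.+1)%N -> P i < P j.
  move=> hij hj.
  have [ej|jm] := eqVneq j m.+1.
    rewrite ej hPm; case: (posnP i) => [->|hi]; first by rewrite hP0.
    have him : (i.-1 < m)%N by rewrite -ltnS prednK // -ej.
    rewrite hPys //; last by rewrite -ltnS -ej.
    by case/andP: (hrange _ him).
  have hjm : (j <= m)%N by rewrite -ltnS ltn_neqAle jm hj.
  have hj0 : (0 < j)%N by apply: leq_ltn_trans hij.
  have hj1 : (j.-1 < m)%N by rewrite -ltnS prednK.
  rewrite (hPys j) //.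
  case: (posnP i) => [->|hi].
    by rewrite hP0; case/andP: (hrange _ hj1).
  rewrite hPys ?(ltnW (leq_trans hij hjm)) //; apply: hmono => //.
  by rewrite -ltnS !prednK.
have hPle i j : (i <= j)%N -> (j <= m.+1)%N -> P i <= P j.
  move=> hij hj; rewrite leq_eqVlt in hij; case/orP: hij => [/eqP->//|hij].
  exact/ltW/hPlt.
have Bneg x : x < gm -> c * x + d < 0.
  move=> hx; have := gm_lt0; (hyps; nra).
have hPs j : (j <= m.+1)%N -> 0 < (-1) ^+ j.+1 * w m.+2 (P j).
  move=> hj; case: (posnP j) => [->|hj0].
    by rewrite hP0 expr1 mulN1r oppr_gt0 wxm_neg.
  have [ej|jm] := eqVneq j m.+1.
    by rewrite ej hPm wgm sgn_pow // gm_lt0.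
  have hjm : (j <= m)%N by rewrite -ltnS ltn_neqAle jm hj.
  have hj1 : (j.-1 < m)%N by rewrite -ltnS prednK.
  rewrite hPys // wS hroot // mulr0 add0r.
  have h1 := hsgn _ hj1; rewrite prednK // in h1.
  have h2 : c * ys j.-1 + d < 0 by apply: Bneg; case/andP: (hrange _ hj1).
  rewrite sgnS; move: h1; set s := (-1) ^+ j; set u := w m (ys j.-1) => h1; nra.
have hex j : exists r, (j <= m)%N ==> ((P j < r < P j.+1) && root (W a b c d m.+2) r).
  case: (leqP j m) => hj /=; last by exists 0.
  have hj' : (j.+1 <= m.+1)%N by [].
  have [r hr1 hr2] := ivt (hPlt j j.+1 (ltnSn j) hj') (hPs j (leqW hj)) (hPs j.+1 hj').
  by exists r; rewrite hr1 hr2.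
pose zs j := xchoose (hex j).
have hz j : (j <= m)%N -> (P j < zs j < P j.+1) /\ root (W a b c d m.+2) (zs j).
  by move=> hj; have /implyP /(_ hj) /andP[h1 h2] := xchooseP (hex j).
have hz1 j : (j <= m)%N -> P j < zs j by move=> hj; case/andP: (hz j hj).1.
have hz2 j : (j <= m)%N -> zs j < P j.+1 by move=> hj; case/andP: (hz j hj).1.
have hgp2 : 0 < (-1) ^+ m.+2 * w m.+2 gp by rewrite wgp sgn_pow // gp_lt0.
have [y' /andP[hy'1 hy'2] hy'3] := ivt gp_lt0 hgp2 (w0_sign m).
have hzlt i j : (i < j)%N -> (j <= m)%N -> zs i < zs j.
  move=> hij hjm; have := hz2 i (ltnW (leq_trans hij hjm)); have := hz1 j hjm.
  have := hPle i.+1 j hij (leqW hjm); (hyps; lra).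
have hzgm i : (i <= m)%N -> zs i < gm.
  move=> hi; have := hz2 i hi; have := hPle i.+1 m.+1 hi (leqnn _); rewrite hPm; (hyps; lra).
pose Lz := rts m.+1 zs y'.
have hall : all (root (W a b c d m.+2)) Lz.
  apply/allP => r; rewrite /Lz /rts mem_cat => /orP[/mapP[i]|].
    by rewrite mem_iota add0n /= => hi ->; case: (hz i hi).
  by rewrite mem_seq1 => /eqP ->.
have hzy' i : (i <= m)%N -> zs i < y'.
  by move=> hi; have := hzgm i hi; (hyps; lra).
have huniq : uniq Lz.
  rewrite /Lz /rts cat_uniq; apply/and3P; split; last by [].
    rewrite map_inj_in_uniq ?iota_uniq // => i j; rewrite !mem_iota !add0n /= => hi hj e.
    case: (ltngtP i j) => // h.
      by have := hzlt i j h hj; rewrite e ltxx.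
    by have := hzlt j i h hi; rewrite e ltxx.
  apply/hasPn => r; rewrite mem_seq1 => /eqP ->; apply/mapP => -[i].
  rewrite mem_iota add0n => /andP[_ hi] e.
  by have := hzy' i hi; rewrite -e ltxx.
have hur : uniq_roots Lz by rewrite uniq_rootsE.
have hWn0 : W a b c d m.+2 != 0.
  apply/negP => /eqP e; have := wgm m.+2; rewrite e horner0 => /esym/eqP.
  by rewrite expf_eq0 /= (lt_eqF gm_lt0).
have hsize : size (W a b c d m.+2) = (size Lz).+1.
  have h1 := max_ring_poly_roots hWn0 hall hur.
  have h2 := sizeW m.+2.
  have h3 : size Lz = m.+2 by rewrite /Lz /rts size_cat size_map size_iota addn1.
  rewrite h3 in h1 *; apply/eqP; rewrite eqn_leq h1 h2.
  by [].
have hfac' := all_roots_prod_XsubC hsize hall hur.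
have ev' := Inv_eval hfac'.
move: ev'; set L' := lead_coef (W a b c d m.+2) => ev'.
have hlead' : 0 < (-1) ^+ m.+1 * L'.
  have h1 := ev' gm; rewrite wgm in h1.
  have h2 := sgn_pow (m.+2) gm_lt0; rewrite h1 in h2.
  have h3 : 0 < (-1) ^+ (m.+1 - m.+1) * \prod_(i <- iota 0 m.+1) (gm - zs i).
    apply: prod_sign => // i hi; split => h; first exact: hzgm.
    by move: (leq_ltn_trans h hi); rewrite ltnn.
  rewrite subnn expr0 mul1r in h3.
  have h4 : gm - y' < 0 by (hyps; lra).
  move: h2 h3; set Pi := \prod_(i <- iota 0 m.+1) _ => h2 h3.
  rewrite sgnS in h2.
  have h5 : 0 < Pi * (y' - gm) by apply: mulr_gt0 => //; (hyps; lra).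
  rewrite -(pmulr_lgt0 _ h5).
  move: h2; set s := (-1) ^+ m.+1 => h2.
  have -> : s * L' * (Pi * (y' - gm)) = s * - (L' * (Pi * (gm - y'))) by ring.
  exact: h2.
have hL'0 : lead_coef (W a b c d m.+2) != 0.
  apply/negP => /eqP e; move: hlead'; rewrite /L' e mulr0 ltxx; by [].
have hunq r j : (j <= m)%N -> P j < r -> r < P j.+1 -> root (W a b c d m.+2) r -> r = zs j.
  move=> hj h1 h2; rewrite hfac' rootZ // root_prod_XsubC /rts mem_cat => /orP[/mapP[i]|].
    rewrite mem_iota add0n => /andP[_ hi] e.
    case: (ltngtP i j) => [hij|hji|] //.
      have := hz2 i (ltnW (leq_trans hij hj)); have := hPle i.+1 j hij (leqW hj).
      rewrite -e; (hyps; lra).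
    have := hz1 i hi; have := hPle j.+1 i hji (ltnW hi).
    rewrite -e; (hyps; lra).
    by move=> ij; rewrite -ij.
  rewrite mem_seq1 => /eqP e.
  have := hPle j.+1 m.+1 hj (leqnn _); rewrite hPm e; (hyps; lra).
have hsgn' j : (j < m.+1)%N -> 0 < (-1) ^+ j.+1 * w m.+1 (zs j).
  move=> hj; rewrite ev.
  have h1 : 0 < (-1) ^+ (m - j) * \prod_(i <- iota 0 m) (zs j - ys i).
    apply: prod_sign => // i hi; split => h.
      have := hz1 j hj; have := hPle i.+1 j h (ltnW hj); rewrite hPys //; (hyps; lra).
    have := hz2 j hj; have := hPle j.+1 i.+1 h (leqW hi); rewrite (hPys i.+1) //; (hyps; lra).
  have h2 : zs j - y < 0 by have := hzgm j hj; (hyps; lra).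
  rewrite (@sgn_comb j m hj).
  move: h1 hlead; set s1 := (-1) ^+ m; set s2 := (-1) ^+ (m - j);
    set Pi := \prod_(i <- iota 0 m) _ => h1 hlead.
  have h3 := mulr_gt0 hlead h1.
  have -> : - (s1 * s2) * (L * (Pi * (zs j - y))) = (s1 * L) * (s2 * Pi) * (- (zs j - y)) by ring.
  by apply: mulr_gt0 => //; rewrite oppr_gt0.
have hxA : forall i, (i < m.+1)%N -> ((i < m.+1./2)%N -> zs i < xA) /\ ((m.+1./2 <= i)%N -> xA < zs i).
  have hk' : m.+1./2 = (m./2 + odd m)%N by rewrite -uphalfE uphalf_half addnC.
  have hm := odd_double_half m.
  rewrite hk'; move: hm; set k := m./2 => hm.
  have hkm : (k <= m)%N by rewrite /k leq_half_double -addnn; exact: leq_trans (leq_addr m m) (leqnSn _).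
  have hPk : P k < xA.
    case: (posnP k) => [->|hk0]; first by rewrite hP0 xm_lt_xA.
    have hk1 : (k.-1 < m)%N by apply: leq_trans hkm; rewrite ltn_predL.
    by rewrite hPys //; apply: (hA k.-1 hk1).1; rewrite ltn_predL.
  have hPk1 : xA < P k.+1.
    case: (eqVneq k m) => [e|ne]; first by rewrite e hPm xA_lt_gm.
    have hkm' : (k < m)%N by rewrite ltn_neqAle ne hkm.
    by rewrite hPys //; apply: (hA k hkm').2.
  have hzk : if odd m then zs k < xA else xA < zs k.
    case ho : (odd m) hm => hm /=.
      have em : m.+2 = (k.+1).*2.+1 by rewrite -hm add1n doubleS.
      have hs : 0 < (-1) ^+ k.+2 * w m.+2 xA.
        have h1 := sgn_pow k.+1 BxA_lt0.
        rewrite em (CF3 k.+1).2 sgnS.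
        have -> : (-1) ^+ k.+1 * - ((c * xA + d) ^+ k.+1 * xA) =
                  ((-1) ^+ k.+1 * (c * xA + d) ^+ k.+1) * (- xA) by ring.
        by apply: mulr_gt0 => //; rewrite oppr_gt0 xA_lt0.
      have [r /andP[hr1 hr2] hr3] := ivt hPk (hPs k (leqW hkm)) hs.
      by rewrite -(hunq r k hkm hr1 (lt_trans hr2 hPk1) hr3).
    have em : m.+2 = (k.+1).*2 by rewrite -hm add0n doubleS.
    have hs : 0 < (-1) ^+ k.+1 * w m.+2 xA by rewrite em (CF3 k.+1).1 sgn_pow // BxA_lt0.
    have [r /andP[hr1 hr2] hr3] := ivt hPk1 hs (hPs k.+1 hkm).
    by rewrite -(hunq r k hkm (lt_trans hPk hr1) hr2 hr3).
  move=> i hi; case: (ltngtP i k) => [hik|hki|eik].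
  - have h1 := hz2 i hi; have h2 := hPle i.+1 k hik (leqW hkm).
    split=> h; first by (hyps; lra).
    exfalso; move: h; apply/negP; rewrite -ltnNge; apply: (leq_trans hik); exact: leq_addr.
  - have h1 := hz1 i hi; have h2 := hPle k.+1 i hki (ltnW hi).
    split=> h; last by (hyps; lra).
    exfalso; move: h; apply/negP; rewrite -leqNgt.
    by case: (odd m); rewrite ?addn1 ?addn0 // ltnW.
  - rewrite eik; case: (odd m) hzk => /= hzk; split=> h //.
      by rewrite addn1 ltnn in h.
    by rewrite addn0 ltnn in h.
have hxm_xp : xm < xp by have := xm_lt_xA; have := xA_lt_xp; (hyps; lra).
have hxpgm := xp_le_gm.
have hxp : forall i, (i < m.+1)%N -> ((i.+1 < m.+1)%N \/ ee m.+2 < 0 -> zs i < xp) /\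
                         ((m.+1 <= i.+1)%N /\ 0 <= ee m.+2 -> xp <= zs i).
  move=> i hi; case: (ltngtP i m) => [him|hmi|eim]; last first.
  -
    rewrite eim.
    case: (leP 0 (ee m.+1)) => he.
      have hm0 : (0 < m)%N.
        case: (posnP m) => // e0; move: he; rewrite e0 ee1; have := xp_lt0; (hyps; lra).
      have hal : 0 < xp - al.
        rewrite ltNge; apply/negP => hh; have := ee_neg m.+1 hh; (hyps; lra).
      have he2 : 0 < ee m.+2 by rewrite eeS; (hyps; lra).
      have hm1 : (m.-1 < m)%N by rewrite ltn_predL.
      have hxys : xp <= ys m.-1 by apply: (hP m.-1 hm1).2; rewrite prednK.
      have h1 := hz1 m (leqnn m); rewrite hPys // in h1.
      split=> h.
        by exfalso; case: h => [|hh]; [rewrite ltnn | (hyps; lra)].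
      (hyps; lra).
    have hPm_lt : P m < xp.
      case: (posnP m) => [->|hm0]; first by rewrite hP0.
      rewrite hPys //; apply: (hP m.-1 _).1; [by rewrite ltn_predL | by right].
    case: (eqVneq xp gm) => [exg|nxg].
      have hal0 := xp_gm_al exg.
      have e0 : xp - al = 0 by apply/eqP; rewrite subr_eq0; apply/eqP; exact: hal0.
      have he2 : ee m.+2 < 0 by rewrite /ee e0 mulr0 add0r al_lt0.
      have h2 := hz2 m (leqnn m); rewrite hPm -exg in h2.
      split=> h; first by [].
      by case: h => _ hh; (hyps; lra).
    have hxpgm' : xp < gm by rewrite lt_neqAle nxg hxpgm.
    case: (ltgtP (ee m.+2) 0) => he2.
    + have hs := wxp_neg he2.
      have [r /andP[hr1 hr2] hr3] := ivt hPm_lt (hPs m (leqnSn m)) hs.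
      have hr2' : r < P m.+1 by rewrite hPm; (hyps; lra).
      have er := hunq r m (leqnn m) hr1 hr2' hr3.
      split=> h; first by rewrite -er.
      by case: h => _ hh; (hyps; lra).
    + have hs := wxp_pos he2.
      have hxq : xp < P m.+1 by rewrite hPm.
      have [r /andP[hr1 hr2] hr3] := ivt hxq hs (hPs m.+1 (leqnn _)).
      have er := hunq r m (leqnn m) (lt_trans hPm_lt hr1) hr2 hr3.
      split=> h; last by rewrite -er ltW.
      by exfalso; case: h => [|hh]; [rewrite ltnn | (hyps; lra)].
    + have hr3 : root (W a b c d m.+2) xp by rewrite rootE wxp he2 mulr0.
      have hxq : xp < P m.+1 by rewrite hPm.
      have er := hunq xp m (leqnn m) hPm_lt hxq hr3.
      split=> h; last by rewrite -er.
      by exfalso; case: h => [|hh]; [rewrite ltnn | (hyps; lra)].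
  - by exfalso; move: hi; rewrite ltnS leqNgt hmi.
  have hzi : zs i < xp.
    have hPi1 : P i.+1 = ys i by rewrite hPys.
    case: (ltnP i.+1 m) => hi1.
      have := (hP i him).1 (or_introl hi1); have := hz2 i (ltnW him); rewrite hPi1; (hyps; lra).
    have eim : i.+1 = m by apply/eqP; rewrite eqn_leq him hi1.
    case: (ltP (ee m.+1) 0) => he.
      have := (hP i him).1 (or_intror he); have := hz2 i (ltnW him); rewrite hPi1; (hyps; lra).
    have hal : 0 < xp - al.
      rewrite ltNge; apply/negP => hh; have := ee_neg m.+1 hh; (hyps; lra).
    have he2 : 0 < ee m.+2 by rewrite eeS; (hyps; lra).
    have hxys : xp <= ys i by apply: (hP i him).2; rewrite eim leqnn.
    have hPi : P i < xp.
      case: (posnP i) => [->|hi0]; first by rewrite hP0.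
      rewrite hPys ?(ltnW (ltnW him)) //; apply: (hP i.-1 _).1.
        by rewrite (leq_ltn_trans (leq_pred i) him).
      by left; rewrite prednK.
    case: (eqVneq xp (ys i)) => [exy|nxy].
      by have := hz2 i (ltnW him); rewrite hPi1 -exy.
    have hlt : xp < P i.+1 by rewrite hPi1 lt_neqAle nxy hxys.
    have hs : 0 < (-1) ^+ i.+2 * w m.+2 xp by rewrite eim; apply: wxp_pos.
    have [r /andP[hr1 hr2] hr3] := ivt hPi (hPs i (leqW (ltnW him))) hs.
    by rewrite -(hunq r i (ltnW him) hr1 (lt_trans hr2 hlt) hr3).
  split=> h; first exact: hzi.
  by exfalso; case: h => hh _; move: hh; rewrite ltnS leqNgt him.
exists zs, y'.
split; first by move=> i j hij hj; apply: hzlt.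
split.
  move=> i hi; rewrite hzgm // andbT.
  have := hPle 0%N i (leq0n _) (ltnW hi); rewrite hP0; have := hz1 i hi; (hyps; lra).
split; first by rewrite hy'1 ltW.
split; first exact: hfac'.
split; first exact: hlead'.
split; first exact: hsgn'.
split; first exact: hxA.
exact: hxp.
Qed.







Lemma Inv_all m : exists ys y, Inv m ys y.
Proof.
elim: m => [|m [ys [y IH]]]; first by exists (fun _ => 0), 0; exact: Inv0.
exact: Inv_step IH.
Qed.

Lemma main_n m : real_rooted (W a b c d m.+1) /\
    forall s : seq R, zeros_list (W a b c d m.+1) s ->
      [/\ count (inJ1 a b c d) s = (m.+1.-1)./2,
          count (fun x => inJ2 a b c d x || inJ3 a b c d x) s = m.+1./2,
          count (inJ4 a b c d) s = 1%N &
          count (inJ3 a b c d) s =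
            (if (DeltaDelta a b c d > Deltag a b c d) && (nplus a b c d <= m.+1%:R)
             then 1%N else 0%N)].
Proof.
have [ys [y [hmono [hrange [hy [hfac [hlead [hsgn [hA hP]]]]]]]]] := Inv_all m.
split; first by exists (rts m ys y).
move=> s hs.
have hL0 : lead_coef (W a b c d m.+1) != 0.
  by apply/negP => /eqP e; move: hlead; rewrite e mulr0 ltxx.
have hperm : perm_eq s (rts m ys y).
  apply: prod_XsubC_eq; apply: (scalerI hL0); rewrite -hs; exact: hfac.
have hcnt p : count p s = (count p (map ys (iota 0 m)) + p y)%N.
  by rewrite (permP hperm) /rts count_cat /= addn0.
have hxA_gm := xA_lt_gm.
have hgmgp := gm_le_gp.
have hxpgm := xp_le_gm.
have hxm_xA := xm_lt_xA.
have hxA_xp := xA_lt_xp.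
case/andP: hy => hy1 hy2.
split.
- rewrite hcnt /= (@count_thr _ _ _ _ m./2); last first.
  + move=> i hi; rewrite /inJ1; case/andP: (hrange i hi) => -> _ /=.
    have [h1 h2] := hA i hi.
    case: (ltnP i m./2) => h; first by rewrite h1.
    by apply/negbTE; rewrite -leNgt ltW // h2.
  + by rewrite leq_half_double -addnn; exact: leq_trans (leq_addr m m) (leqnSn _).
  suff -> : inJ1 a b c d y = false by rewrite addn0.
  have hAy : xA < y by (hyps; lra).
  by rewrite /inJ1 (lt_gtF hAy) andbF.
- rewrite hcnt (@count_thr2 _ _ _ _ m./2); last first.
  + move=> i hi; rewrite /inJ2 /inJ3; case/andP: (hrange i hi) => _ h3.
    have [h1 h2] := hA i hi.
    case: (ltnP i m./2) => h.
      have h4 := h1 h; have h5 : ys i < xp by (hyps; lra).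
      by rewrite (lt_gtF h4) (lt_geF h5).
    rewrite h2 //= h3 andbT.
    by case: (ltP (ys i) xp).
  + by rewrite leq_half_double -addnn; exact: leq_trans (leq_addr m m) (leqnSn _).
  suff -> : (inJ2 a b c d y || inJ3 a b c d y) = false by rewrite addn0 half_sub.
  have hgy : gm < y by (hyps; lra).
  have hpy : xp < y by (hyps; lra).
  by rewrite /inJ2 /inJ3 (lt_gtF hgy) (lt_gtF hpy) !andbF.
- rewrite hcnt (@count_thr _ _ _ _ 0).
  + by rewrite /inJ4 hy1 hy2.
  + by [].
  + move=> i hi; rewrite ltn0 /inJ4.
    case/andP: (hrange i hi) => _ h; have h' : ys i < gp by (hyps; lra).
    by rewrite (lt_gtF h').
- have hy3 : inJ3 a b c d y = false.
    have hgy : gm < y by (hyps; lra).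
    by rewrite /inJ3 (lt_gtF hgy) andbF.
  rewrite hcnt hy3 addn0 -cond_eq.
  case: (leP 0 (ee m.+1)) => he.
    have hm0 : (0 < m)%N.
      case: (posnP m) => // e0; move: he; rewrite e0 ee1; have := xp_lt0; (hyps; lra).
    rewrite (@count_thr2 _ _ _ _ m.-1).
    + by rewrite -subn1 subKn.
    + by rewrite leq_pred.
    move=> i hi; rewrite /inJ3; case/andP: (hrange i hi) => _ h3; rewrite h3 andbT.
    have [h1 h2] := hP i hi.
    case: (ltnP i.+1 m) => hi1.
      rewrite (_ : (m.-1 <= i)%N = false); last by apply/negbTE; rewrite -ltnNge -ltnS prednK.
      by apply/negbTE; rewrite -ltNge; apply: h1; left.
    rewrite (_ : (m.-1 <= i)%N = true); last by rewrite -ltnS prednK.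
    by apply: h2.
  rewrite (@count_thr _ _ _ _ 0) //.
  move=> i hi; rewrite ltn0 /inJ3; apply/negbTE; rewrite negb_and -ltNge.
  by rewrite (proj1 (hP i hi)) //; right.
Qed.

End Main.

Unset Implicit Arguments.

Theorem theorem3p2 (R : rcfType) (a b c d : R)
  (ha : a < 0) (hb : b < 0) (hd : d < 0) (hc : 0 < c)
  (hcm : c <= cminus a b d) :
  forall n : nat, (1 <= n)%N ->
    real_rooted (W a b c d n) /\
    forall s : seq R, zeros_list (W a b c d n) s ->
      [/\ count (inJ1 a b c d) s = (n.-1)./2,
          count (fun x => inJ2 a b c d x || inJ3 a b c d x) s = n./2,
          count (inJ4 a b c d) s = 1%N &
          count (inJ3 a b c d) s =
            (if (DeltaDelta a b c d > Deltag a b c d) && (nplus a b c d <= n%:R)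
             then 1%N else 0%N)].
Proof.
by case=> [|m] // _; apply: (main_n ha hb hd hc hcm).
Qed.
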